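(* Let $p$ be an odd prime, let $a$ be an integer with $a\not\equiv 0,\pm1\pmod p$, and let $n\ge 1$ with $T_n(a)\not\equiv\pm1\pmod p$. Define $\epsilon(b)=\left(\frac{b^2-1}{p}\right)$ and $\delta(b)=\left(\frac{2(b+1)}{p}\right)$ (Legendre symbols). Then $\epsilon(T_n(a))=\epsilon(a)$. Moreover $\delta(T_n(a))=1$ if $n$ is even and $\delta(T_n(a))=\delta(a)$ if $n$ is odd.
   Context: $T_n(x)$ denotes the Chebyshev polynomial of the first kind, the integer polynomial with $T_n(\cos\theta)=\cos n\theta$, equivalently $(x+\sqrt{x^2-1})^n=T_n(x)+U_{n-1}(x)\sqrt{x^2-1}$. *)

(* Defs.v *)
From mathcomp Require Import all_boot all_order all_algebra.
Set Implicit Arguments. Unset Strict Implicit. Unset Printing Implicit Defensive.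
Import Order.TTheory GRing.Theory Num.Theory.
Local Open Scope ring_scope.

(* Chebyshev polynomial of the first kind, evaluated in a commutative ring:
   T_0 = 1, T_1 = x, T_{n+2} = 2 x T_{n+1} - T_n.  (Equivalent to T_n(cos t) = cos(n t).) *)
Fixpoint chebT_pair {R : comNzRingType} (x : R) (n : nat) : R * R :=
  match n with
  | 0%N => (1, x)
  | k.+1 => let (a, b) := chebT_pair x k in (b, 2 * x * b - a)
  end.

Definition chebT {R : comNzRingType} (n : nat) (x : R) : R := (chebT_pair x n).1.

Definition legendre (a : int) (p : nat) : int :=
  if (p%:Z %| a)%Z then 0
  else if [exists x : 'I_p, ((x%:Z) ^+ 2 == a %[mod p%:Z])%Z] then 1 else -1.

(* Main.v *)
Require Import Defs.
From mathcomp Require Import all_boot all_order all_algebra.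
From mathcomp Require Import ring zify.
Set Implicit Arguments. Unset Strict Implicit.
Import Order.TTheory GRing.Theory Num.Theory.
Local Open Scope ring_scope.

Section Cheb.
Variable R : comNzRingType.

Lemma pairS (x : R) k : chebT_pair x k.+1 =
  ((chebT_pair x k).2, 2 * x * (chebT_pair x k).2 - (chebT_pair x k).1).
Proof. by rewrite /=; case: (chebT_pair x k). Qed.

Lemma chebT0 (x : R) : chebT 0 x = 1. Proof. by []. Qed.
Lemma chebT1 (x : R) : chebT 1 x = x. Proof. by []. Qed.

Lemma chebTSS (x : R) k : chebT k.+2 x = 2 * x * chebT k.+1 x - chebT k x.
Proof. by rewrite /chebT !pairS /=. Qed.

Lemma cheb_inv (x : R) k :
  chebT k x ^+ 2 + chebT k.+1 x ^+ 2 - 2 * x * chebT k x * chebT k.+1 x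
  = 1 - x ^+ 2.
Proof.
elim: k => [|k IH]; first by rewrite chebT0 chebT1; ring.
rewrite chebTSS -IH; ring.
Qed.

Lemma cheb_double (x : R) m :
  chebT m.*2 x = 2 * chebT m x ^+ 2 - 1 /\
  chebT m.*2.+1 x = 2 * chebT m x * chebT m.+1 x - x.
Proof.
elim: m => [|m [IH1 IH2]]; first by rewrite /= chebT0 chebT1; split; ring.
have IH := cheb_inv x m.
have E1 : chebT m.+1.*2 x = 2 * chebT m.+1 x ^+ 2 - 1.
  rewrite doubleS chebTSS IH1 IH2.
  have -> : 2 * chebT m.+1 x ^+ 2 - 1 = 2 * chebT m.+1 x ^+ 2 - 1
     - 2 * (chebT m x ^+ 2 + chebT m.+1 x ^+ 2 - 2 * x * chebT m x * chebT m.+1 x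
            - (1 - x ^+ 2)) by rewrite IH; ring.
  ring.
split => //.
rewrite -[(m.+1).*2.+1]/(m.*2.+3) chebTSS -[(m.*2).+2]/((m.+1).*2) E1 IH2.
rewrite chebTSS; ring.
Qed.

End Cheb.

Lemma cheb_morph (R S : comNzRingType) (f : {rmorphism R -> S}) (x : R) k :
  f (chebT k x) = chebT k (f x).
Proof.
suff : f (chebT k x) = chebT k (f x) /\ f (chebT k.+1 x) = chebT k.+1 (f x) by case.
elim: k => [|k [IH1 IH2]]; first by rewrite !chebT0 !chebT1 rmorph1.
split => //; rewrite !chebTSS rmorphB !rmorphM IH1 IH2 rmorph_nat.
reflexivity.
Qed.

Lemma cheb_int2 (R : comNzRingType) (a : int) k :
  intmul 1 (chebT k a) = chebT k (intmul (1 : R) a) /\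
  intmul 1 (chebT k.+1 a) = chebT k.+1 (intmul (1 : R) a).
Proof.
elim: k => [|k [IH1 IH2]]; first by [].
split => //; rewrite !chebTSS intrB !intrM IH1 IH2 //.
Qed.

Lemma cheb_int (R : comNzRingType) (a : int) k :
  (chebT k a)%:~R = chebT k (a%:~R : R).
Proof. by case: (cheb_int2 R a k). Qed.

Section Fin.
Variable F : finFieldType.

Definition Lf (u : F) : int :=
  if u == 0 then 0 else if [exists z : F, z ^+ 2 == u] then 1 else -1.

Lemma sq_trans (u v w : F) : u != 0 -> u * v = w ^+ 2 ->
  [exists z : F, z ^+ 2 == u] -> [exists z : F, z ^+ 2 == v].
Proof.
move=> u0 E /existsP [z /eqP zu]; apply/existsP; exists (w / z).
have z0 : z != 0 by apply: contraNneq u0 => z0; rewrite -zu z0 expr0n.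
rewrite expr_div_n -E -zu mulrC mulKf //; exact: expf_neq0.
Qed.

Lemma Lf_eq (u v w : F) : u != 0 -> v != 0 -> u * v = w ^+ 2 -> Lf u = Lf v.
Proof.
move=> u0 v0 E; rewrite /Lf (negbTE u0) (negbTE v0).
have E' : v * u = w ^+ 2 by rewrite mulrC.
case: (boolP [exists z, z ^+ 2 == u]) => h1; case: (boolP [exists z, z ^+ 2 == v]) => h2 //.
- by rewrite (sq_trans u0 E h1) in h2.
- by rewrite (sq_trans v0 E' h2) in h1.
Qed.

Lemma Lf_sq (u w : F) : u != 0 -> u = w ^+ 2 -> Lf u = 1.
Proof.
move=> u0 E; rewrite /Lf (negbTE u0); case: existsP => // [[]]; exists w.
by rewrite E.
Qed.

Lemma main_field (x : F) n : (2 : F) != 0 -> x != 1 -> x != -1 ->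
  chebT n x != 1 -> chebT n x != -1 ->
  Lf (chebT n x ^+ 2 - 1) = Lf (x ^+ 2 - 1) /\
  Lf (2 * (chebT n x + 1)) = (if odd n then Lf (2 * (x + 1)) else 1).
Proof.
move=> h2 hx1 hx2 ht1 ht2.
have sqnz (y : F) : y != 1 -> y != -1 -> y ^+ 2 - 1 != 0.
  move=> a b; have -> : y ^+ 2 - 1 = (y - 1) * (y + 1) by ring.
  rewrite mulf_neq0 // ?subr_eq0 // addr_eq0 //.
have pnz (y : F) : y != -1 -> 2 * (y + 1) != 0.
  by move=> a; rewrite mulf_neq0 // addr_eq0.
split.
  apply: (Lf_eq (w := chebT n.+1 x - x * chebT n x)); rewrite ?sqnz //.
  have I := cheb_inv x n.
  have -> : (chebT n.+1 x - x * chebT n x) ^+ 2 = (chebT n x ^+ 2 - 1) * (x ^+ 2 - 1)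
     + (chebT n x ^+ 2 + chebT n.+1 x ^+ 2 - 2 * x * chebT n x * chebT n.+1 x
        - (1 - x ^+ 2)) by ring.
  rewrite I; ring.
have [m E] : exists m, n = (odd n + m.*2)%N.
  by exists n./2; rewrite odd_double_half.
rewrite E in ht1 ht2 *.
move: (odd n) ht1 ht2 => [|] ht1 ht2.
- have [_ D] := cheb_double x m.
  rewrite add1n in ht1 ht2 *.
  rewrite /= odd_double /= D in ht1 ht2 *.
  apply: (Lf_eq (w := 2 * (chebT m x + chebT m.+1 x))); rewrite ?pnz //.
  have I := cheb_inv x m.
  have -> : (2 * (chebT m x + chebT m.+1 x)) ^+ 2 =
    2 * (2 * chebT m x * chebT m.+1 x - x + 1) * (2 * (x + 1)) +
    4 * (chebT m x ^+ 2 + chebT m.+1 x ^+ 2 - 2 * x * chebT m x * chebT m.+1 x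
        - (1 - x ^+ 2)) by ring.
  rewrite I; ring.
- have [D _] := cheb_double x m.
  rewrite add0n in ht1 ht2 *.
  rewrite odd_double D in ht1 ht2 *.
  apply: (Lf_sq (w := 2 * chebT m x)); rewrite ?pnz //.
  ring.
Qed.
End Fin.

Section Conv.
Variable p : nat.
Hypothesis pp : prime p.

Lemma modK (x y : int) : (x == y %[mod p%:Z])%Z = (x%:~R == y%:~R :> 'F_p).
Proof.
by rewrite eqz_mod_dvd (dvdz_pcharf (pchar_Fp pp)) rmorphB /= subr_eq0.
Qed.

Lemma legendreE (a : int) : legendre a p = Lf (a%:~R : 'F_p).
Proof.
rewrite /legendre /Lf (dvdz_pcharf (pchar_Fp pp)).
case: (_ == 0) => //.
have -> : [exists x : 'I_p, ((x%:Z) ^+ 2 == a %[mod p%:Z])%Z] =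
          [exists z : 'F_p, z ^+ 2 == a%:~R].
  apply/existsP/existsP => [[x]|[z]].
    rewrite modK rmorphXn /= => h; exists (x : nat)%:R; exact: h.
  move=> /eqP h.
  have lt : (val z < p)%N.
    by apply: (leq_trans (ltn_ord z)); rewrite (Fp_cast pp).
  exists (Ordinal lt); rewrite modK rmorphXn /=.
  have -> : ((val z)%:Z)%:~R = z :> 'F_p.
    apply: val_inj; rewrite /= -[((val z)%:Z)%:~R]/((val z)%:R : 'F_p).
    by rewrite val_Fp_nat // modn_small.
  by rewrite h.
by [].
Qed.
End Conv.

Theorem lemma3p3 (p : nat) (a : int) (n : nat) :
  prime p -> odd p ->
  ~~ (p%:Z %| a)%Z -> (a != 1 %[mod p%:Z])%Z -> (a != -1 %[mod p%:Z])%Z ->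
  (1 <= n)%N ->
  (chebT n a != 1 %[mod p%:Z])%Z -> (chebT n a != -1 %[mod p%:Z])%Z ->
  legendre (chebT n a ^+ 2 - 1) p = legendre (a ^+ 2 - 1) p /\
  legendre (2 * (chebT n a + 1)) p =
    (if odd n then legendre (2 * (a + 1)) p else 1).
Proof.
move=> pp op _ h1 h2 _ h3 h4.
rewrite !legendreE //.
rewrite !modK // in h1 h2 h3 h4.
rewrite cheb_int in h3 h4.
rewrite !intrB !intrM !intrD cheb_int.
have e1 : (1%:~R : 'F_p) = 1 by [].
have em : ((-1)%:~R : 'F_p) = -1 by rewrite intrN.
rewrite e1 in h1 h3 *; rewrite em in h2 h4.
have e2 : (1 + 1 : 'F_p) = 2 by [].
rewrite e2 -!expr2.
have two : (2 : 'F_p) != 0.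
  rewrite -[2]/(2%:R) -(dvdn_pcharf (pchar_Fp pp)).
  apply/negP => /(dvdn_leq (isT : (0 < 2)%N)) le2.
  have := prime_gt1 pp => gt1.
  have e : p = 2%N by lia.
  by rewrite e in op.
exact: main_field.
Qed.
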